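(* Let $S\subset\mathbb{R}^q$ be compact and $\ell:\mathbb{R}^q\times\mathbb{R}^q\to(0,1)$ continuous. Let $s\in S$ and let $(\xi_k)_{k\in\mathbb{N}}\subset\mathbb{R}^q$ be $n$-periodic for some $n\in\mathbb{N}$, i.e. $\xi_{k+n}=\xi_k$ for all $k$. Let $d_1,d_2,\dots\in\{0,1\}$ be independent random variables with $\Pr(d_k=1)=\ell(s,\xi_k)$. Let $c_1,\dots,c_M\in S$ be distinct, let $\hat p_0:\{1,\dots,M\}\to(0,1)$ with $\sum_i\hat p_0(i)=1$, and define $\hat p_k$ by $$\hat p_k(i\mid d_{1:k};\xi_{1:k})=\frac{g(d_k\mid c_i;\xi_k)\,\hat p_{k-1}(i\mid d_{1:k-1};\xi_{1:k-1})}{\sum_{j=1}^M g(d_k\mid c_j;\xi_k)\,\hat p_{k-1}(j\mid d_{1:k-1};\xi_{1:k-1})},$$ where $g(d\mid x;\xi)=\ell(x,\xi)^d(1-\ell(x,\xi))^{1-d}$. Let $$\mathcal{O}=\{i\in\{1,\dots,M\}: \hat p_k(i\mid d_{1:k};\xi_{1:k})\to 0 \text{ almost surely as } k\to\infty\},$$ and for $x\in\mathbb{R}^q$ let $$K(s\|x;\xi_{1:n})=\sum_{k=1}^n\Big[\ell(s,\xi_k)\ln\frac{\ell(s,\xi_k)}{\ell(x,\xi_k)}+(1-\ell(s,\xi_k))\ln\frac{1-\ell(s,\xi_k)}{1-\ell(x,\xi_k)}\Big].$$ Then $$\{1,\dots,M\}\setminus\mathcal{O}\subset\operatorname*{ar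gmin}_{i\in\{1,\dots,M\}}K(s\|c_i;\xi_{1:n}).$$
   Context: $K(s\|x;\xi_{1:n})$ is the Kullback–Leibler divergence between the joint distribution of $n$ independent binary measurements at $\xi_1,\dots,\xi_n$ with source at $s$ and the one with source at $x$. *)

(* Defs.v *)
From HB Require Import structures.
From mathcomp Require Import all_boot all_order all_algebra.
From mathcomp Require Import all_classical all_reals all_analysis.
Set Implicit Arguments. Unset Strict Implicit. Unset Printing Implicit Defensive.
Import Order.TTheory GRing.Theory Num.Theory.
Import numFieldNormedType.Exports.
Local Open Scope classical_set_scope.
Local Open Scope ring_scope.

Definition mutually_independent_bool d (T : measurableType d) (R : realType)
  (P : probability T R) (X : nat -> T -> bool) : Prop :=
  forall (J : seq nat) (b : nat -> bool), uniq J ->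
    P (\bigcap_(j in [set` J]) [set w | X j w = b j]) =
    (\prod_(j <- J) P [set w | X j w = b j])%E.

Definition glik (R : realType) (q : nat) (ell : 'rV[R]_q * 'rV[R]_q -> R)
  (dk : bool) (x xi : 'rV[R]_q) : R :=
  ell (x, xi) ^+ (nat_of_bool dk) * (1 - ell (x, xi)) ^+ (1 - nat_of_bool dk).

(* Posterior phat k i (d_{1:k}; xi_{1:k}); indices of d and xi start at 1
   (d 0, xi 0 are unused). *)
Fixpoint phat (R : realType) (q M : nat) (ell : 'rV[R]_q * 'rV[R]_q -> R)
  (c : 'I_M -> 'rV[R]_q) (p0 : 'I_M -> R) (xi : nat -> 'rV[R]_q)
  (d : nat -> bool) (k : nat) (i : 'I_M) : R :=
  match k with
  | 0 => p0 i
  | k'.+1 =>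
      glik ell (d k) (c i) (xi k) * phat ell c p0 xi d k' i /
      \sum_(j < M) glik ell (d k) (c j) (xi k) * phat ell c p0 xi d k' j
  end.

Definition KL (R : realType) (q : nat) (ell : 'rV[R]_q * 'rV[R]_q -> R)
  (n : nat) (xi : nat -> 'rV[R]_q) (s x : 'rV[R]_q) : R :=
  \sum_(1 <= k < n.+1)
    (ell (s, xi k) * ln (ell (s, xi k) / ell (x, xi k)) +
     (1 - ell (s, xi k)) * ln ((1 - ell (s, xi k)) / (1 - ell (x, xi k)))).

(* Main.v *)
Require Import Defs.
From HB Require Import structures.
From mathcomp Require Import all_boot all_order all_algebra.
From mathcomp Require Import all_classical all_reals all_analysis.
From mathcomp Require Import ring lra.
Set Implicit Arguments. Unset Strict Implicit. Unset Printing Implicit Defensive.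
Import Order.TTheory GRing.Theory Num.Theory.
Import numFieldNormedType.Exports.
Local Open Scope classical_set_scope.
Local Open Scope ring_scope.

Lemma expR_le_quad (R : realType) (y : R) : y <= 1/2 -> expR y <= 1 + y + 2 * y ^+ 2.
Proof.
move=> hy.
have h1 : 1 - y <= expR (- y) by have := expR_ge1Dx (- y); rewrite addrC.
have hpos : 0 < 1 - y by lra.
have -> : expR y = (expR (- y))^-1 by rewrite expRN invrK.
have hq : 1 <= (1 - y) * (1 + y + 2 * y ^+ 2).
  have : 0 <= y ^+ 2 * (1 - 2 * y) by apply: mulr_ge0; [exact: sqr_ge0| lra].
  move=> h; nra.
rewrite -(ler_pM2l hpos); apply: le_trans hq.
by rewrite ler_pdivrMr ?expR_gt0 // mul1r.
Qed.

Lemma bern_mgf (R : realType) (p a b B t : R) :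
  0 <= p <= 1 -> 0 <= t -> `|a| <= B -> `|b| <= B -> t * B <= 1/2 ->
  p * expR (t * a) + (1 - p) * expR (t * b) <=
  1 + t * (p * a + (1 - p) * b) + 2 * (t ^+ 2 * B ^+ 2).
Proof.
move=> /andP[p0 p1] t0 ha hb htB.
have key : forall x, `|x| <= B -> expR (t * x) <= 1 + t * x + 2 * (t ^+ 2 * B ^+ 2).
  move=> x hx.
  have B0 : 0 <= B by exact: le_trans (normr_ge0 _) hx.
  have htx : `|t * x| <= t * B by rewrite normrM ger0_norm // ler_wpM2l.
  apply: le_trans; first apply: expR_le_quad.
    by apply: le_trans htB; apply: le_trans htx; exact: ler_norm.
  rewrite lerD2l ler_wpM2l // -exprMn.
  rewrite -(real_normK (num_real (t * x))).
  have := normr_ge0 (t * x); move: htx; set u := `|t * x|; move=> h1 h2.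
  by rewrite !expr2; nra.
have ea := key a ha; have eb := key b hb.
have q0 : 0 <= 1 - p by lra.
have := ler_wpM2l p0 ea; have := ler_wpM2l q0 eb.
move=> h1 h2; nra.
Qed.

Definition cyl {T : Type} (d : nat -> T -> bool) {k : nat} (f : {ffun 'I_k -> bool}) : set T :=
  [set w | forall m : 'I_k, d m.+1 w = f m].

Lemma in_bigsetI {T : Type} {I : eqType} (s : seq I) (F : I -> set T) w :
  (\big[setI/setT]_(x <- s) F x) w <-> forall x, x \in s -> F x w.
Proof.
elim: s => [|x s IH]; first by rewrite big_nil; split.
rewrite big_cons; split.
  by move=> [h1 /IH h2] y; rewrite inE => /orP[/eqP ->|/h2].
by move=> h; split; [apply: h; rewrite mem_head| apply/IH => y ys; apply: h; rewrite inE ys orbT].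
Qed.

Lemma cyl_meas dT (T : measurableType dT) (d : nat -> T -> bool) k (f : {ffun 'I_k -> bool}) :
  (forall k b, measurable [set w | d k w = b]) -> measurable (cyl d f).
Proof.
move=> md.
have -> : cyl d f = \big[setI/setT]_(m < k) [set w | d m.+1 w = f m].
  apply/seteqP; split => w /=.
    by move=> h; apply/in_bigsetI => m _; exact: h.
  by move/in_bigsetI => h m; apply: h; rewrite mem_index_enum.
by apply: bigsetI_measurable => m _; exact: md.
Qed.

Lemma cyl_prob dT (T : measurableType dT) (R : realType) (P : probability T R)
  (d : nat -> T -> bool) (p : nat -> R) k (f : {ffun 'I_k -> bool}) :
  (forall k b, measurable [set w | d k w = b]) ->
  mutually_independent_bool P d ->
  (forall k, (1 <= k)%N -> P [set w | d k w = true] = (p k)%:E) ->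
  P (cyl d f) = (\prod_(m < k) (if f m then p m.+1 else 1 - p m.+1))%:E.
Proof.
move=> md ind hp.
pose b j := if (insub j.-1 : option 'I_k) is Some m then f m else false.
have hb (m : 'I_k) : b m.+1 = f m by rewrite /b /= valK.
have := ind (iota 1 k) b (iota_uniq 1 k).
have -> : \bigcap_(j in [set` iota 1 k]) [set w | d j w = b j] = cyl d f.
  apply/seteqP; split => w /=.
    move=> h m; rewrite -hb; apply: h => /=.
    by rewrite mem_iota add1n ltnS /=; case: m.
  move=> h j /=; rewrite mem_iota add1n ltnS => /andP[j1 jk].
  have jk' : (j.-1 < k)%N by rewrite prednK.
  have := h (Ordinal jk'); rewrite /= prednK // => ->.
  by rewrite /b insubT.
move=> ->.
rewrite -prodEFin.
transitivity (\prod_(m < k) (if b m.+1 then p m.+1 else 1 - p m.+1)%:E)%E; last first.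
  by apply: eq_bigr => m _; rewrite hb.
rewrite -(big_mkord xpredT (fun m => (if b m.+1 then p m.+1 else 1 - p m.+1)%:E)).
rewrite /index_iota subn0 -[iota 1 k]/(iota (1 + 0) k) iotaDl big_map.
apply: eq_bigr => m _ /=; rewrite add1n.
case: (b m.+1); first exact: hp.
have -> : [set w | d m.+1 w = false] = ~` [set w | d m.+1 w = true].
  by apply/seteqP; split => w /=; case: (d m.+1 w).
by rewrite probability_setC // hp.
Qed.

Lemma union_bound dT (T : measurableType dT) (R : realType) (mu : {measure set T -> \bar R})
  (I : Type) (s : seq I) (Q : pred I) (F : I -> set T) :
  (forall x, measurable (F x)) ->
  (mu (\big[setU/set0]_(x <- s | Q x) F x) <= \sum_(x <- s | Q x) mu (F x))%E.
Proof.
move=> mF; elim: s => [|x s IH]; first by rewrite !big_nil measure0.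
rewrite !big_cons; case: (Q x) => //.
apply: le_trans (measureU2 _ _ _) _ => //.
  by apply: bigsetU_measurable.
exact: leeD2l.
Qed.

Lemma in_bigsetU {T : Type} {I : eqType} (s : seq I) (Q : pred I) (F : I -> set T) w :
  (\big[setU/set0]_(x <- s | Q x) F x) w <-> exists x, [/\ x \in s, Q x & F x w].
Proof.
elim: s => [|x s IH]; first by rewrite big_nil; split => // -[x []].
rewrite big_cons; split.
  case: ifP => Qx.
    case=> [h|/IH [y [ys Qy Fy]]]; first by exists x; rewrite mem_head.
    by exists y; rewrite inE ys orbT.
  by move=> /IH [y [ys Qy Fy]]; exists y; rewrite inE ys orbT.
move=> [y [+ Qy Fy]]; rewrite inE => /orP[/eqP eyx|ys].
  by subst y; rewrite Qy; left.
case: ifP => _; last by apply/IH; exists y.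
by right; apply/IH; exists y.
Qed.

Lemma markov_fin dT (T : measurableType dT) (R : realType) (P : probability T R)
  (d : nat -> T -> bool) (p : nat -> R) (h : nat -> bool -> R) k (thr t : R) :
  (forall k b, measurable [set w | d k w = b]) ->
  mutually_independent_bool P d ->
  (forall k, (1 <= k)%N -> P [set w | d k w = true] = (p k)%:E) ->
  (forall k, 0 <= p k <= 1) -> 0 <= t ->
  let A := [set w | thr <= \sum_(m < k) h m.+1 (d m.+1 w)] in
  measurable A /\
  (P A <= (expR (- (t * thr)) * \prod_(m < k)
     (p m.+1 * expR (t * h m.+1 true) + (1 - p m.+1) * expR (t * h m.+1 false)))%:E)%E.
Proof.
move=> md ind hp p01 t0 A.
pose Sf (f : {ffun 'I_k -> bool}) := \sum_(m < k) h m.+1 (f m).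
pose pi (f : {ffun 'I_k -> bool}) := \prod_(m < k) (if f m then p m.+1 else 1 - p m.+1).
have AE : A = \big[setU/set0]_(f | thr <= Sf f) cyl d f.
  apply/seteqP; split => w /=.
    move=> hw; apply/in_bigsetU; exists [ffun m : 'I_k => d m.+1 w]; split.
    - by rewrite mem_index_enum.
    - by rewrite /Sf; under eq_bigr do rewrite ffunE.
    - by move=> m; rewrite ffunE.
  move=> /in_bigsetU [f [_ hf cf]].
  rewrite /A /=; move: hf; rewrite /Sf.
  suff -> : \sum_(m < k) h m.+1 (d m.+1 w) = \sum_(m < k) h m.+1 (f m) by [].
  by apply: eq_bigr => m _; rewrite cf.
have mA : measurable A by rewrite AE; apply: bigsetU_measurable => f _; exact: cyl_meas.
split => //.
rewrite AE; apply: le_trans; first by apply: union_bound => f; exact: cyl_meas.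
rewrite (eq_bigr (fun f => (pi f)%:E)); last by move=> f _; exact: (cyl_prob f md ind hp).
rewrite sumEFin lee_fin.
have pi0 f : 0 <= pi f.
  by apply: prodr_ge0 => m _; case: (f m); have := p01 m.+1; lra.
apply: (@le_trans _ _ (\sum_(f : {ffun 'I_k -> bool}) pi f * expR (t * (Sf f - thr)))).
  rewrite big_mkcond /=; apply: ler_sum => f _.
  case: ifP => hf; last by rewrite mulr_ge0 ?expR_ge0.
  rewrite -[X in X <= _]mulr1 ler_wpM2l // -expR0 ler_expR mulr_ge0 //.
  by rewrite subr_ge0.
have -> : \sum_(f : {ffun 'I_k -> bool}) pi f * expR (t * (Sf f - thr)) =
   expR (- (t * thr)) * \sum_(f : {ffun 'I_k -> bool}) \prod_(m < k)
     ((if f m then p m.+1 else 1 - p m.+1) * expR (t * h m.+1 (f m))).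
  rewrite mulr_sumr; apply: eq_bigr => f _.
  rewrite big_split /= -expR_sum -mulr_sumr mulrA [_ * pi f]mulrC -mulrA -expRD.
  by rewrite /Sf mulrBr addrC.
rewrite -(bigA_distr_bigA (fun (m : 'I_k) (x : bool) => (if x then p m.+1 else 1 - p m.+1) * expR (t * h m.+1 x))) /=.
apply: ler_wpM2l; first exact: expR_ge0.
by apply: ler_prod => m _; rewrite big_bool /= lexx andbT addr_ge0 // mulr_ge0 ?expR_ge0 //;
  have := p01 m.+1; lra.
Qed.

Lemma glik_gt0 (R : realType) q (ell : 'rV[R]_q * 'rV[R]_q -> R) b x xi :
  (forall z, 0 < ell z < 1) -> 0 < glik ell b x xi.
Proof.
move=> h; have := h (x, xi); rewrite /glik; case: b => /= /andP[h1 h2].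
  by rewrite expr1 expr0 mulr1.
by rewrite expr0 expr1 mul1r subr_gt0.
Qed.

Lemma phat_gt0 (R : realType) q M (ell : 'rV[R]_q * 'rV[R]_q -> R) c p0 xi d k (i : 'I_M) :
  (forall z, 0 < ell z < 1) -> (forall i, 0 < p0 i) ->
  0 < phat ell c p0 xi d k i.
Proof.
move=> hl hp; elim: k i => [|k IH] i /=; first exact: hp.
apply: divr_gt0; first by apply: mulr_gt0; [exact: glik_gt0|exact: IH].
rewrite (bigD1 i) //=.
have : 0 <= \sum_(j < M | j != i) glik ell (d k.+1) (c j) (xi k.+1) * phat ell c p0 xi d k j.
  by apply: sumr_ge0 => j _; apply: mulr_ge0; apply: ltW; [exact: glik_gt0|exact: IH].
have := mulr_gt0 (glik_gt0 (d k.+1) (c i) (xi k.+1) hl) (IH i).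
lra.
Qed.

Lemma phat_sum1 (R : realType) q M (ell : 'rV[R]_q * 'rV[R]_q -> R) c p0 xi d k :
  (forall z, 0 < ell z < 1) -> (forall i, 0 < p0 i) -> \sum_(i < M) p0 i = 1 ->
  \sum_(i < M) phat ell c p0 xi d k i = 1.
Proof.
move=> hl hp hs; case: k => [|k] //=.
rewrite -mulr_suml divff //.
case: M c p0 hp hs => [|M] c p0 hp hs; first by rewrite big_ord0 in hs; move/eqP: hs; rewrite eq_sym oner_eq0.
apply: lt0r_neq0; rewrite (bigD1 ord0) //=.
have : 0 <= \sum_(j < M.+1 | j != ord0) glik ell (d k.+1) (c j) (xi k.+1) * phat ell c p0 xi d k j.
  by apply: sumr_ge0 => j _; apply: mulr_ge0; apply: ltW; [exact: glik_gt0|exact: phat_gt0].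
have := mulr_gt0 (glik_gt0 (d k.+1) (c ord0) (xi k.+1) hl) (phat_gt0 c xi d k ord0 hl hp).
lra.
Qed.

Lemma phat_le1 (R : realType) q M (ell : 'rV[R]_q * 'rV[R]_q -> R) c p0 xi d k (j : 'I_M) :
  (forall z, 0 < ell z < 1) -> (forall i, 0 < p0 i) -> \sum_(i < M) p0 i = 1 ->
  phat ell c p0 xi d k j <= 1.
Proof.
move=> hl hp hs; rewrite -(phat_sum1 c xi d k hl hp hs) (bigD1 j) //= lerDl.
by apply: sumr_ge0 => l _; apply: ltW; exact: phat_gt0.
Qed.

Lemma phat_ratio (R : realType) q M (ell : 'rV[R]_q * 'rV[R]_q -> R) c p0 xi d k (i j : 'I_M) :
  phat ell c p0 xi d k i * (p0 j * \prod_(m < k) glik ell (d m.+1) (c j) (xi m.+1)) =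
  phat ell c p0 xi d k j * (p0 i * \prod_(m < k) glik ell (d m.+1) (c i) (xi m.+1)).
Proof.
elim: k => [|k IH] /=; first by rewrite !big_ord0 !mulr1 mulrC.
rewrite !big_ord_recr /=.
set Z := \sum_(j0 < M) _.
set gi := glik ell (d k.+1) (c i) (xi k.+1).
set gj := glik ell (d k.+1) (c j) (xi k.+1).
rewrite -/(phat ell c p0 xi d k i) -/(phat ell c p0 xi d k j).
transitivity (gi * gj / Z * (phat ell c p0 xi d k i * (p0 j * \prod_(m < k) glik ell (d m.+1) (c j) (xi m.+1)))).
  by ring.
by rewrite IH; ring.
Qed.

Lemma geom_le (R : realFieldType) (C r : R) N : 0 <= C -> 0 <= r < 1 ->
  \sum_(k < N) C * r ^+ k <= C / (1 - r).
Proof.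
move=> C0 /andP[r0 r1].
have e : (1 - r) * \sum_(k < N) r ^+ k = 1 - r ^+ N.
  elim: N => [|N IH]; first by rewrite big_ord0 mulr0 expr0 subrr.
  by rewrite big_ord_recr /= mulrDr IH exprSr; ring.
have rN : 0 <= r ^+ N by rewrite exprn_ge0.
have r1' : 0 < 1 - r by rewrite subr_gt0.
rewrite -mulr_sumr ler_pdivlMr // -mulrA [_ * (1 - r)]mulrC e.
rewrite -[X in _ <= X]mulr1 ler_wpM2l //; lra.
Qed.

Unset Implicit Arguments. Set Strict Implicit.

Theorem theorem4 (R : realType) (q : nat) (S : set 'rV[R]_q)
  (ell : 'rV[R]_q * 'rV[R]_q -> R)
  (s : 'rV[R]_q) (xi : nat -> 'rV[R]_q) (n : nat)
  (dT : measure_display) (T : measurableType dT) (P : probability T R)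
  (d : nat -> T -> bool)
  (M : nat) (c : 'I_M -> 'rV[R]_q) (p0 : 'I_M -> R) :
  compact S ->
  continuous ell ->
  (forall z, 0 < ell z < 1) ->
  s \in S ->
  (forall k, xi (k + n)%N = xi k) ->
  (forall k b, measurable [set w | d k w = b]) ->
  mutually_independent_bool P d ->
  (forall k, (1 <= k)%N -> P [set w | d k w = true] = (ell (s, xi k))%:E) ->
  injective c ->
  (forall i, c i \in S) ->
  (forall i, 0 < p0 i < 1) ->
  \sum_(i < M) p0 i = 1 ->
  forall i : 'I_M,
    ~ {ae P, forall w, (fun k => phat ell c p0 xi (d^~ w) k i) @ \oo --> (0 : R)} ->
    forall j : 'I_M, KL ell n xi s (c i) <= KL ell n xi s (c j).
Proof.
move=> _ _ hl _ hxi md ind hp _ _ hp01 hsum i hnot j.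
have hp0 l : 0 < p0 l by have /andP[] := hp01 l.
have [n0|npos] := posnP n.
  by rewrite /KL n0 !big_geq.
rewrite leNgt; apply/negP => hlt; apply: hnot.
pose p m := ell (s, xi m).
have p01 m : 0 <= p m <= 1 by have /andP[h1 h2] := hl (s, xi m); rewrite /p; apply/andP; split; apply: ltW.
pose h m b := ln (glik ell b (c i) (xi m)) - ln (glik ell b (c j) (xi m)).
pose mu m := p m * h m true + (1 - p m) * h m false.
pose D := \sum_(m < n) mu m.+1.
have DE : D = KL ell n xi s (c j) - KL ell n xi s (c i).
  rewrite /D /KL -sumrB big_add1 /= big_mkord; apply: eq_bigr => m _.
  rewrite /mu /h /p /glik /= !expr1 !expr0 !mulr1 !mul1r.
  have /andP[a1 a2] := hl (s, xi m.+1).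
  have /andP[b1 b2] := hl (c i, xi m.+1).
  have /andP[c1 c2] := hl (c j, xi m.+1).
  rewrite !ln_div ?posrE ?subr_gt0 //; ring.
have D0 : D < 0 by rewrite DE subr_lt0.
pose B := 1 + \sum_(m < n) (`|h m true| + `|h m false|).
have B1 : 1 <= B.
  by rewrite /B lerDl; apply: sumr_ge0 => m _; rewrite addr_ge0.
have hq r q' : xi (r + q' * n)%N = xi r.
  elim: q' => [|q' IH]; first by rewrite mul0n addn0.
  by rewrite mulSn addnCA addnC hxi IH.
have hper m : xi m = xi (m %% n)%N.
  by rewrite {1}(divn_eq m n) addnC hq.
have hB m b : `|h m b| <= B.
  have -> : h m b = h (m %% n)%N b by rewrite /h -hper.
  have hr : (m %% n < n)%N by rewrite ltn_pmod.
  have h1 : `|h (m %% n)%N b| <= `|h (m %% n)%N true| + `|h (m %% n)%N false|.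
    by case: b; [rewrite lerDl | rewrite lerDr].
  apply: (le_trans h1); rewrite /B (bigD1 (Ordinal hr)) //=.
  have : 0 <= \sum_(l < n | l != Ordinal hr) (`|h l true| + `|h l false|).
    by apply: sumr_ge0 => l _; rewrite addr_ge0.
  lra.
have hmuB m : `|mu m| <= B.
  have /andP[pa pb] := p01 m.
  have q0 : 0 <= 1 - p m by lra.
  apply: (le_trans (ler_normD _ _)); rewrite !normrM (ger0_norm pa) (ger0_norm q0).
  have := ler_wpM2l pa (hB m true); have := ler_wpM2l q0 (hB m false).
  lra.
pose Tk k := \sum_(m < k) mu m.+1.
pose del := - D / n%:R.
have del0 : 0 < del by rewrite /del divr_gt0 ?ltr0n // oppr_gt0.
have delE : del * n%:R = - D by rewrite /del mulfVK // pnatr_eq0 -lt0n.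
have muper m : mu (m + n)%N = mu m by rewrite /mu /h /p !hxi.
have Tshift k : Tk (n + k)%N = D + Tk k.
  rewrite /Tk big_split_ord /=; congr (_ + _).
  by apply: eq_bigr => m _; rewrite /= -addnS addnC muper.
have Tq q' r : Tk (q' * n + r)%N = q'%:R * D + Tk r.
  elim: q' => [|q' IH]; first by rewrite mul0n add0n mul0r add0r.
  by rewrite mulSn -addnA Tshift IH -natr1; ring.
have TrB r : Tk r <= r%:R * B.
  rewrite /Tk; apply: le_trans.
    by apply: ler_sum => m _; exact: (le_trans (ler_norm _) (hmuB m.+1)).
  by rewrite sumr_const card_ord mulr_natl.
have Tbound k : Tk k <= - (del * k%:R) + del * n%:R + n%:R * B.
  rewrite {1}(divn_eq k n) Tq.
  have hr : ((k %% n)%:R <= n%:R :> R) by rewrite ler_nat ltnW // ltn_pmod.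
  have hk : (k%:R : R) = (k %/ n)%:R * n%:R + (k %% n)%:R.
    by rewrite {1}(divn_eq k n) natrD natrM.
  have := TrB (k %% n)%N.
  have B0 : 0 <= B by lra.
  have := ler_wpM2r B0 hr.
  have := ler_wpM2l (ltW del0) hr.
  have eD : (k %/ n)%:R * D = - (del * ((k %/ n)%:R * n%:R)) by rewrite mulrCA delE; ring.
  rewrite eD hk; lra.
pose t := del / (4 * B ^+ 2).
have t0 : 0 < t by rewrite /t divr_gt0 // mulr_gt0 // exprn_gt0 // (lt_le_trans _ B1).
pose A k := [set w | - (k%:R * del / 4) <= \sum_(m < k) h m.+1 (d m.+1 w)].
pose C := expR (t * (del * n%:R + n%:R * B)).
pose r := expR (- (t * del / 4)).
have r01 : 0 < r < 1 by rewrite /r expR_gt0 expR_lt1 oppr_lt0 /= divr_gt0 // mulr_gt0.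
have delB : del <= B.
  have hD : - D <= n%:R * B.
    rewrite /D -sumrN; apply: (@le_trans _ _ (\sum_(m < n) B)).
      by apply: ler_sum => m _; apply: (le_trans (ler_norm _)); rewrite normrN.
    by rewrite sumr_const card_ord mulr_natl.
  have n0' : (0 : R) < n%:R by rewrite ltr0n.
  rewrite -delE in hD; rewrite -(ler_pM2r n0') mulrC; lra.
have tB : t * B <= 1 / 2.
  have e : t * B * (4 * B) = del.
    by rewrite /t; field; rewrite -[B]/(B) gt_eqF //; apply: (lt_le_trans _ B1).
  nra.
have e2 : 2 * (t ^+ 2 * B ^+ 2) = t * del / 2.
  by rewrite /t; field; rewrite gt_eqF //; apply: (lt_le_trans _ B1).
have hA k : measurable (A k) /\ (P (A k) <= (C * r ^+ k)%:E)%E.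
  have [mA PA] := markov_fin h k (- (k%:R * del / 4)) md ind hp p01 (ltW t0).
  split; first exact: mA.
  apply: le_trans PA _; rewrite lee_fin.
  apply: (@le_trans _ _ (expR (- (t * - (k%:R * del / 4))) *
     \prod_(m < k) expR (t * mu m.+1 + 2 * (t ^+ 2 * B ^+ 2)))).
    apply: ler_wpM2l; first exact: expR_ge0.
    apply: ler_prod => m _; apply/andP; split.
      have /andP[pa pb] := p01 m.+1.
      by rewrite addr_ge0 // mulr_ge0 ?expR_ge0 // subr_ge0.
    apply: le_trans; first exact: (bern_mgf (p01 m.+1) (ltW t0) (hB _ _) (hB _ _) tB).
    by rewrite -addrA; exact: expR_ge1Dx.
  rewrite -expR_sum -expRD /C /r -expRM_natl -expRD ler_expR.
  rewrite big_split /= -mulr_sumr sumr_const card_ord -mulr_natl e2 -/(Tk k).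
  have := ler_wpM2l (ltW t0) (Tbound k).
  lra.
have BC : P (lim_sup_set A) = 0.
  apply: lim_sup_set_cvg0; first by move=> k; exact: (hA k).1.
  apply: (@le_lt_trans _ _ (C / (1 - r))%:E); last exact: ltry.
  apply: lime_le; first by apply: is_cvg_nneseries => k _ _; exact: measure_ge0.
  apply: nearW => N.
  apply: (@le_trans _ _ (\sum_(0 <= k < N) (C * r ^+ k)%:E)%E).
    by apply: lee_sum => k _; exact: (hA k).2.
  rewrite sumEFin lee_fin big_mkord; apply: geom_le; first exact: expR_ge0.
  by case/andP: r01 => r0 ->; rewrite ltW.
exists (lim_sup_set A); split => //.
  apply: bigcap_measurable => // k _; apply: bigcup_measurable => l _; exact: (hA l).1.
move=> w hw N _; apply: contrapT => hN; apply: hw => /=.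
have hS k : (N <= k)%N -> \sum_(m < k) h m.+1 (d m.+1 w) < - (k%:R * del / 4).
  move=> Nk; rewrite ltNge; apply/negP => hk; apply: hN; exists k => //.
pose a := p0 i / p0 j; pose z := expR (- (del / 4)).
have a0 : 0 <= a by rewrite /a divr_ge0 // ltW.
apply: (@squeeze_cvgr _ _ _ _ (fun _ => 0) (fun k => geometric a z k)).
- exists N => // k /= Nk; apply/andP; split.
    by apply: ltW; exact: phat_gt0.
  have Gi0 : 0 < \prod_(m < k) glik ell (d m.+1 w) (c i) (xi m.+1).
    by apply: prodr_gt0 => m _; exact: glik_gt0.
  have Gj0 : 0 < \prod_(m < k) glik ell (d m.+1 w) (c j) (xi m.+1).
    by apply: prodr_gt0 => m _; exact: glik_gt0.
  have rat := phat_ratio ell c p0 xi (d^~ w) k i j.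
  have le1 : phat ell c p0 xi (d^~ w) k i * (p0 j * \prod_(m < k) glik ell (d m.+1 w) (c j) (xi m.+1))
      <= p0 i * \prod_(m < k) glik ell (d m.+1 w) (c i) (xi m.+1).
    rewrite rat -[X in _ <= X]mul1r ler_wpM2r //; last exact: phat_le1.
    by rewrite mulr_ge0 // ltW.
  have GiGj : \prod_(m < k) glik ell (d m.+1 w) (c i) (xi m.+1) /
              \prod_(m < k) glik ell (d m.+1 w) (c j) (xi m.+1) =
              expR (\sum_(m < k) h m.+1 (d m.+1 w)).
    rewrite expR_sum -prodf_div; apply: eq_bigr => m _.
    by rewrite /h expRB !lnK ?posrE ?glik_gt0.
  apply: (@le_trans _ _ (a * expR (\sum_(m < k) h m.+1 (d m.+1 w)))).
    rewrite -ler_pdivlMr ?mulr_gt0 ?hp0 // in le1.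
    rewrite -GiGj /a.
    apply: (le_trans le1); rewrite le_eqVlt; apply/orP; left; apply/eqP.
    by field; rewrite !gt_eqF ?hp0.
  rewrite /geometric /= /z -expRM_natl ler_wpM2l // ler_expR.
  by apply: ltW; apply: (lt_le_trans (hS k Nk)); rewrite le_eqVlt; apply/orP; left; apply/eqP; ring.
- exact: cvg_cst.
- apply: cvg_geometric; rewrite ger0_norm ?expR_ge0 // expR_lt1 oppr_lt0.
  by rewrite divr_gt0.
Qed.
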